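(* The convex Vietoris functor $\mathbb{V}^{\mathrm{c}}\colon\mathbf{CompOrd}\to\mathbf{CompOrd}$ preserves regular monomorphisms; equivalently, if $f\colon X\to Y$ is an order-reflecting morphism of compact ordered spaces (i.e. $f(x)\le f(y)$ implies $x\le y$), then $\mathbb{V}^{\mathrm{c}}f$ is order-reflecting with respect to the Egli–Milner orders.
   Context: $\mathbf{CompOrd}$ is the category of compact ordered spaces (compact Hausdorff spaces with a partial order closed in $X\times X$) and continuous order-preserving maps; its regular monomorphisms are exactly the order-reflecting morphisms. For a subset $Y$ of a poset, $\uparrow Y$, $\downarrow Y$ are up- and down-closure; $Y$ is convex if $y_1\le x\le y_2$ with $y_1,y_2\in Y$ implies $x\in Y$; $\updownarrow Y=\uparrow Y\cap\downarrow Y$. $\mathbb{V}^{\mathrm{c}}X$ is the set of closed convex subsets of $X$ with the topology generated by $\Diamond U=\{K\mid K\cap U\neq\varnothing\}$ and $\Box U=\{K\mid K\subseteq U\}$ ($U$ open upset or open downset of $X$) and the Egli–Milner order $K\le_{\mathrm{EM}}L$ iff $\uparrow L\subseteq\uparrow K$ and $\downarrow K\subseteq\downarrow L$; $\mathbb{V}^{\mathrm{c}}f(K)=\updownarrow f[K]$. *)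

(* Defs.v *)
From mathcomp Require Import all_boot.
From mathcomp Require Import boolp classical_sets topology.
Set Implicit Arguments. Unset Strict Implicit. Unset Printing Implicit Defensive.
Local Open Scope classical_set_scope.

Definition compact_ordered_space (X : topologicalType) (le : X -> X -> Prop) :=
  hausdorff_space X /\ compact [set: X] /\
  (forall x, le x x) /\
  (forall x y, le x y -> le y x -> x = y) /\
  (forall x y z, le x y -> le y z -> le x z) /\
  closed [set p : X * X | le p.1 p.2].

Definition compord_morphism (X Y : topologicalType)
  (leX : X -> X -> Prop) (leY : Y -> Y -> Prop) (f : X -> Y) :=
  continuous f /\ (forall x y, leX x y -> leY (f x) (f y)).

Definition order_reflecting (X Y : Type)
  (leX : X -> X -> Prop) (leY : Y -> Y -> Prop) (f : X -> Y) :=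
  forall x y, leY (f x) (f y) -> leX x y.

Definition upc (X : Type) (le : X -> X -> Prop) (A : set X) : set X :=
  [set x | exists2 a, A a & le a x].
Definition downc (X : Type) (le : X -> X -> Prop) (A : set X) : set X :=
  [set x | exists2 a, A a & le x a].
Definition updownc (X : Type) (le : X -> X -> Prop) (A : set X) : set X :=
  upc le A `&` downc le A.

Definition convex_set (X : Type) (le : X -> X -> Prop) (A : set X) :=
  forall y1 x y2, A y1 -> A y2 -> le y1 x -> le x y2 -> A x.

(* Elements of V^c X: closed convex subsets. *)
Definition closed_convex (X : topologicalType) (le : X -> X -> Prop) (K : set X) :=
  closed K /\ convex_set le K.

Definition egli_milner (X : Type) (le : X -> X -> Prop) (K L : set X) :=
  upc le L `<=` upc le K /\ downc le K `<=` downc le L.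

Definition Vc_map (X Y : Type) (leY : Y -> Y -> Prop) (f : X -> Y) (K : set X)
  : set Y := updownc leY (f @` K).

(* Main.v *)
Require Import Defs.
From mathcomp Require Import all_boot.
From mathcomp Require Import boolp classical_sets topology.
Local Open Scope classical_set_scope.

Theorem lemma3p18 (X Y : topologicalType)
  (leX : X -> X -> Prop) (leY : Y -> Y -> Prop) (f : X -> Y) :
  compact_ordered_space leX -> compact_ordered_space leY ->
  compord_morphism leX leY f ->
  order_reflecting leX leY f ->
  forall K L : set X, closed_convex leX K -> closed_convex leX L ->
    egli_milner leY (Vc_map leY f K) (Vc_map leY f L) ->
    egli_milner leX K L.
Proof.
move=> [_ [_ [_ [_ [trX _]]]]] [_ [_ [reY [_ [trY _]]]]] _ fr K L _ _ [Hup Hdn].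
split.
- move=> x [l Ll lx].
  have Hfl : upc leY (Vc_map leY f L) (f l).
    exists (f l) => //; split; exists (f l) => //; exists l => //.
  have [a [[b [k Kk <-] ka] _] al] := Hup _ Hfl.
  exists k => //; apply: trX lx; apply: fr; exact: trY ka al.
- move=> x [k Kk xk].
  have Hfk : downc leY (Vc_map leY f K) (f k).
    exists (f k) => //; split; exists (f k) => //; exists k => //.
  have [a [_ [b [l Ll <-] al]] ka] := Hdn _ Hfk.
  exists l => //; apply: trX xk _; apply: fr; exact: trY ka al.
Qed.
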